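(* Let $q$ be even and let $U$ be an intersecting family of polynomials over $\mathbb{F}_q$ of degree at most $2$ with $|U|>\frac{q^2+q}{2}$. Suppose $H\subseteq U$ has more than $\frac{q^2}{2}$ elements and there exist $\alpha,\beta\in\mathbb{F}_q$ with $h(\alpha)=\beta$ for all $h\in H$. Then $f(\alpha)=\beta$ for every $f\in U$.
   Context: A set of polynomials over $\mathbb{F}_q$ is intersecting if for any two members $f_1,f_2$ the graphs $\{(x,f_i(x)):x\in\mathbb{F}_q\}$ share at least one point. *)

(* Defs.v *)
From HB Require Import structures.
From mathcomp Require Import all_boot all_order all_algebra all_field.
Set Implicit Arguments. Unset Strict Implicit. Unset Printing Implicit Defensive.
Import GRing.Theory.
Local Open Scope ring_scope.

Definition intersecting (F : finFieldType) (U : seq {poly F}) : Prop :=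
  forall f1 f2, f1 \in U -> f2 \in U -> exists x : F, f1.[x] = f2.[x].

(* Main.v *)
Require Import Defs.
From HB Require Import structures.
From mathcomp Require Import all_boot all_order all_algebra all_field.
From mathcomp Require Import ring zify.
Import GRing.Theory.
Local Open Scope ring_scope.

Lemma sq_sub_pchar2 {F : fieldType} (ch : 2%N \in [pchar F]) (x y : F) :
  x ^+ 2 - y ^+ 2 = (x - y) ^+ 2.
Proof.
apply/eqP; rewrite -subr_eq0; apply/eqP.
have -> : x ^+ 2 - y ^+ 2 - (x - y) ^+ 2 = (x * y - y ^+ 2) *+ 2 by ring.
exact: mulrn_pchar.
Qed.

Definition Sset {F : finFieldType} (alpha beta c b f1 f2 : F) : {set F} :=
  [set a : F | [exists x : F, beta + b*(x-alpha) + a*(x^+2-alpha^+2)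
        == c + f1*(x-alpha) + f2*(x^+2 - alpha^+2)]].

Lemma key (F : finFieldType) (ch : 2%N \in [pchar F]) (alpha beta c b f1 f2 : F) :
  c != beta -> b != f1 ->
  (2 * #|Sset alpha beta c b f1 f2| <= #|F|)%N.
Proof.
move=> cb bf.
set B := b - f1; set C := beta - c.
have B0 : B != 0 by rewrite subr_eq0.
have C0 : C != 0 by rewrite subr_eq0 eq_sym.
pose phi u := C * u ^+ 2 + B * u.
have phiD u v : phi (u + v) = phi u + phi v.
  rewrite /phi; apply/eqP; rewrite -subr_eq0; apply/eqP.
  have -> : C * (u + v) ^+ 2 + B * (u + v) - (C * u ^+ 2 + B * u + (C * v ^+ 2 + B * v))
     = (C * u * v) *+ 2 by ring.
  exact: mulrn_pchar.
pose T := [set f2 + phi u | u : F].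
have sST : Sset alpha beta c b f1 f2 \subset T.
  apply/subsetP => a; rewrite /Sset inE => /existsP[x /eqP E].
  rewrite !(sq_sub_pchar2 ch) in E.
  set t := x - alpha in E.
  have E2 : (a - f2) * t ^+ 2 = C + B * t.
    apply/eqP; rewrite -subr_eq0; apply/eqP.
    have -> : (a - f2) * t ^+ 2 - (C + B * t) =
       (beta + b * t + a * t ^+ 2 - (c + f1 * t + f2 * t ^+ 2)) - (C + B*t) *+ 2.
      by rewrite /C /B; ring.
    by rewrite E subrr mulrn_pchar // subr0.
  have t0 : t != 0.
    apply/eqP => t0; move: E2; rewrite t0 expr0n /= mulr0 mulr0 addr0 => /eqP.
    by rewrite eq_sym (negbTE C0).
  apply/imsetP; exists t^-1 => //.
  have -> : a = f2 + (C + B * t) / t ^+ 2.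
    by rewrite -E2 mulfK ?expf_neq0 // addrC subrK.
  by rewrite /phi; congr (_ + _); field.
have phi0 : phi (B / C) = 0.
  rewrite /phi; have -> : C * (B / C) ^+ 2 + B * (B / C) = (B * B / C) *+ 2.
    by field.
  exact: mulrn_pchar.
have TltF : (#|T| < #|F|)%N.
  rewrite ltn_neqAle max_card andbT.
  apply/negP => /eqP HH.
  have : #|T| == #|predT : pred F| by rewrite HH cardT.
  rewrite /T; move=> /imset_injP inj.
  have : B / C = 0.
    apply: inj; rewrite ?inE //.
    by rewrite phi0 /phi; ring.
  by apply/eqP; rewrite mulf_neq0 ?invr_eq0.
have [d dT] : exists d, d \notin T.
  apply/existsP; move: TltF; apply: contraLR; rewrite negb_exists => /forallP H.
  rewrite -leqNgt -cardsT subset_leq_card //; apply/subsetP => y _.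
  by have := H y; rewrite negbK.
set del := d - f2.
pose T2 := [set del + y | y in T].
have dis : [disjoint T & T2].
  rewrite -setI_eq0; apply/eqP/setP => z; rewrite !inE.
  apply/negP => /andP[/imsetP[u _ ->] /imsetP[y /imsetP[v _ ->] E]].
  move: dT; rewrite /del in E *; apply/negP; rewrite negbK.
  apply/imsetP; exists (u + v) => //.
  rewrite phiD; apply/eqP; rewrite -subr_eq0; apply/eqP.
  have -> : d - (f2 + (phi u + phi v)) = (d - f2 + (f2 + phi v)) - (f2 + phi u) - (phi v) *+ 2.
    by ring.
  by rewrite -E subrr sub0r mulrn_pchar // oppr0.
have cT2 : #|T2| = #|T| by apply: card_imset; apply: addrI.
have cU : #|T :|: T2| = (#|T| + #|T2|)%N.
  by rewrite cardsU (disjoint_setI0 dis) cards0 subn0.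
have := max_card (mem (T :|: T2)); rewrite cU cT2 addnn -mul2n => h.
apply: leq_trans h; rewrite leq_mul2l /=.
exact: subset_leq_card sST.
Qed.
Lemma char2_of_even (F : finFieldType) : ~~ odd #|F| -> 2%N \in [pchar F].
Proof.
move=> ev; have [p pr pc] := finPcharP F.
have cF : #|F| = (p ^ logn p #|F|)%N := card_pprimeChar pc.
suff p2 : p = 2%N by rewrite -p2.
apply/eqP; rewrite eq_sym -(@dvdn_prime2 2 p) //.
have : (2 %| p ^ logn p #|F|)%N by rewrite -cF dvdn2.
by rewrite Euclid_dvdX // => /andP[].
Qed.

Lemma horner3 {F : fieldType} (p : {poly F}) (x : F) :
  (size p <= 3)%N -> p.[x] = p`_0 + p`_1 * x + p`_2 * x ^+ 2.
Proof.
move=> sp; rewrite (horner_coef_wide x sp) !big_ord_recr big_ord0 /=.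
by rewrite expr0 expr1 mulr1 add0r.
Qed.

Lemma hornerE3 {F : fieldType} (p : {poly F}) (alpha x : F) :
  (size p <= 3)%N ->
  p.[x] = p.[alpha] + p`_1 * (x - alpha) + p`_2 * (x ^+ 2 - alpha ^+ 2).
Proof. by move=> sp; rewrite !horner3 //; ring. Qed.

Lemma coord_inj {F : fieldType} (p r : {poly F}) (alpha : F) :
  (size p <= 3)%N -> (size r <= 3)%N -> p.[alpha] = r.[alpha] ->
  p`_1 = r`_1 -> p`_2 = r`_2 -> p = r.
Proof.
move=> sp sr ea e1 e2; apply/polyP => i.
case: i => [|[|[|i]]] //.
  by move: ea; rewrite !horner3 // e1 e2 => /addIr /addIr.
by rewrite !nth_default // (leq_trans _ (isT : (3 <= i.+3)%N)).
Qed.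

Lemma samecoord_eval {F : fieldType} (p r : {poly F}) (alpha x : F) :
  (size p <= 3)%N -> (size r <= 3)%N ->
  p`_1 = r`_1 -> p`_2 = r`_2 -> p.[x] = r.[x] -> p.[alpha] = r.[alpha].
Proof.
move=> sp sr e1 e2; rewrite (hornerE3 _ alpha x sp) (hornerE3 _ alpha x sr) e1 e2.
by move/addIr/addIr.
Qed.

Lemma rowS {F : finType} (X : {set F * F}) (b : F) (S : {set F}) :
  (forall p, p \in X -> p.1 == b -> p.2 \in S) ->
  (#|[set p in X | p.1 == b]| <= #|S|)%N.
Proof.
move=> H; rewrite -(card_imset S (fun a1 a2 (e : (b, a1) = (b, a2)) => congr1 snd e)).
apply: subset_leq_card; apply/subsetP => -[p1 p2]; rewrite inE => /andP[pX /eqP /= e].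
apply/imsetP; exists p2; last by rewrite e.
by apply: (H _ pX); rewrite e.
Qed.

Lemma rowcount {F : finType} (X : {set F * F}) (b0 : F) :
  (forall b, b != b0 -> 2 * #|[set p in X | p.1 == b]| <= #|F|)%N ->
  (2 * #|X| <= (#|F| - 1) * #|F| + 2 * #|[set p in X | p.1 == b0]|)%N.
Proof.
move=> H.
have -> : #|X| = (\sum_(b : F) #|[set p in X | p.1 == b]|)%N.
  rewrite -sum1_card (partition_big (fun p : F * F => p.1) predT) //=.
  apply: eq_bigr => b _; rewrite -sum1_card; apply: eq_bigl => p.
  by rewrite inE.
rewrite (bigD1 b0) //= mulnDr addnC leq_add2r.
rewrite big_distrr /=.
apply: (@leq_trans (\sum_(b | b != b0) #|F|)).
  by apply: leq_sum => b hb; apply: H.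
rewrite sum_nat_const leq_mul2r; apply/orP; right.
have -> : #|(fun i : F => i != b0)| = #|predC1 b0| by apply: eq_card.
by rewrite cardC1 subn1.
Qed.

Definition coord {F : fieldType} (h : {poly F}) : F * F := (h`_1, h`_2).

Lemma rowbound (F : finFieldType) (ch : 2%N \in [pchar F]) (alpha beta : F)
  (L : seq {poly F}) (f : {poly F}) (b : F) :
  (forall h, h \in L -> (size h <= 3)%N /\ h.[alpha] = beta /\ exists x, h.[x] = f.[x]) ->
  (size f <= 3)%N -> f.[alpha] != beta -> b != f`_1 ->
  (2 * #|[set p in [set x in map coord L] | p.1 == b]| <= #|F|)%N.
Proof.
move=> HL sf fb bf.
apply: leq_trans (@key F ch alpha beta f.[alpha] b f`_1 f`_2 fb bf); rewrite leq_mul2l; apply/orP; right.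
apply: rowS => p; rewrite inE => /mapP[h hL ->] /= /eqP hb.
have [sh [ha [x hx]]] := HL h hL.
rewrite /Sset inE; apply/existsP; exists x.
by rewrite -hb -{1}ha -!hornerE3 // hx.
Qed.

Lemma card_coord (F : finFieldType) (L : seq {poly F}) :
  uniq (map coord L) -> #|[set x in map coord L]| = size L.
Proof.
move=> u; rewrite cardsE; move/card_uniqP: u; rewrite size_map; apply.
Qed.

Theorem lemma6 (F : finFieldType) (U H : seq {poly F}) (alpha beta : F) :
  ~~ odd #|F| ->
  uniq U ->
  (forall f, f \in U -> (size f <= 3)%N) ->
  intersecting U ->
  (#|F| ^ 2 + #|F| < 2 * size U)%N ->
  uniq H ->
  {subset H <= U} ->
  (#|F| ^ 2 < 2 * size H)%N ->
  (forall h, h \in H -> h.[alpha] = beta) ->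
  forall f, f \in U -> f.[alpha] = beta.
Proof.
move=> ev uU szU intU ltU uH sHU ltH hH f fU.
have ch := char2_of_even F ev.
apply/eqP; apply: contraT => fb.
have sf := szU f fU.
have q1 : (0 < #|F|)%N by apply/card_gt0P; exists 0.
have eq2 : ((#|F| - 1) * #|F| + #|F| = #|F| ^ 2)%N.
  by rewrite mulnBl mul1n subnK ?leq_pmull // -expnSr.
have injU : {in U &, injective coord}.
  move=> g g' gU g'U e.
  have [e1 e2] : g`_1 = g'`_1 /\ g`_2 = g'`_2 by case: e.
  have [x hx] := intU g g' gU g'U.
  apply: (coord_inj _ _ alpha (szU _ gU) (szU _ g'U) _ e1 e2).
  exact: (samecoord_eval _ _ alpha x (szU _ gU) (szU _ g'U) e1 e2 hx).
case: (boolP (has (fun g => (g.[alpha] != beta) && (g`_1 != f`_1)) U)).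
- case/hasP => g gU /andP[gb gf].
  have HL : forall h, h \in H -> (size h <= 3)%N /\ h.[alpha] = beta /\ exists x, h.[x] = f.[x].
    by move=> h hH'; split; [exact: szU (sHU _ hH') | split; [exact: hH | exact: intU (sHU _ hH') fU]].
  have HLg : forall h, h \in H -> (size h <= 3)%N /\ h.[alpha] = beta /\ exists x, h.[x] = g.[x].
    by move=> h hH'; split; [exact: szU (sHU _ hH') | split; [exact: hH | exact: intU (sHU _ hH') gU]].
  have cX : #|[set x in map coord H]| = size H.
    apply: card_coord; rewrite map_inj_in_uniq // => g1 g2 /sHU g1U /sHU g2U.
    exact: injU.
  have r1 := rowcount _ _ (fun b hb => @rowbound F ch alpha beta _ f b HL sf fb hb).
  have r2 := @rowbound F ch alpha beta H g f`_1 HLg (szU g gU) gb (ltac:(by rewrite eq_sym)).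
  move: eq2 ltH r1 r2; rewrite cX; move: ((#|F| - 1) * #|F|)%N (#|F| ^ 2)%N => A B; move: (#|F|) => qq; move: (size H) => sH; move: (#|[set p in [set x in [seq coord i | i <- H]] | p.1 == f`_1]|) => rr; move=> *; lia.
- move/hasPn => hn.
  set UG := [seq h <- U | h.[alpha] == beta].
  set K := [seq h <- U | h.[alpha] != beta].
  have sU : size U = (size UG + size K)%N.
    by rewrite !size_filter (count_predC (fun h => h.[alpha] == beta)).
  have HL : forall h, h \in UG -> (size h <= 3)%N /\ h.[alpha] = beta /\ exists x, h.[x] = f.[x].
    move=> h; rewrite mem_filter => /andP[/eqP ha hU].
    by split; [exact: szU | split; [exact: ha | exact: intU hU fU]].
  have cX : #|[set x in map coord UG]| = size UG.
    apply: card_coord; rewrite map_inj_in_uniq ?filter_uniq // => g1 g2.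
    rewrite !mem_filter => /andP[_ g1U] /andP[_ g2U]; exact: injU.
  have cY : #|[set x in map coord K]| = size K.
    apply: card_coord; rewrite map_inj_in_uniq ?filter_uniq // => g1 g2.
    rewrite !mem_filter => /andP[_ g1U] /andP[_ g2U]; exact: injU.
  have r1 := rowcount _ _ (fun b hb => @rowbound F ch alpha beta _ f b HL sf fb hb).
  set R := [set p in [set x in map coord UG] | p.1 == f`_1] in r1.
  set Y := [set x in map coord K] in cY.
  have dis : [disjoint R & Y].
    rewrite -setI_eq0; apply/eqP/setP => p; rewrite !inE.
    apply/negP => /andP[/andP[/mapP[h hUG ->] _] /mapP[g gK e]].
    move: hUG gK; rewrite !mem_filter => /andP[/eqP ha hU] /andP[gb gU].
    by move: gb; rewrite -(injU _ _ hU gU e) ha eqxx.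
  have sub : R :|: Y \subset [set p in [set: F * F] | p.1 == f`_1].
    apply/subsetP => p; rewrite !inE => /orP[/andP[_ ->] //|/mapP[g gK ->]].
    move: gK; rewrite mem_filter => /andP[gb gU].
    by have := hn g gU; rewrite gb /= negbK.
  have le1 := subset_leq_card sub.
  have le2 : (#|[set p in [set: F * F] | p.1 == (f`_1)%R]| <= #|[set: F]|)%N.
    by apply: rowS => p _ _; rewrite in_setT.
  rewrite cardsU (disjoint_setI0 dis) cards0 subn0 cardsT in le1 le2.
  move: eq2 ltU r1 le1 le2; rewrite sU cX cY.
  move: ((#|F| - 1) * #|F|)%N (#|F| ^ 2)%N => A B.
  move: (#|[set p in [set: F * F] | p.1 == (f`_1)%R]|) => ss.
  move: (#|R|) (size UG) (size K) (#|F|) => rr su sk qq; move=> *; lia.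
Qed.
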